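(* Let $E$ be an $\mathbb{R}$-group, $X$ a locally compact (Hausdorff) space not reduced to one point, and suppose there exists a continuous absorptive action $\mathcal{H}=(H_\varepsilon)_{\varepsilon\in E}$ of $E$ on $X$. Then $X$ is noncompact, nondiscrete, and $\sigma$-compact.
   Context: An $\mathbb{R}$-group is an abelian group $E$ (operation written multiplicatively) whose underlying set is a subset of $\mathbb{R}$ containing all positive integers, such that: (RG1) with the natural order of $\mathbb{R}$, $E$ is a totally ordered group; (RG2) with the topology induced from $\mathbb{R}$, $E$ is a locally compact group; (RG3) there is a nonconstant continuous homomorphism $h:E\to\mathbb{R}_+^*$ such that for every $\alpha\in E$ the set $\{\varepsilon\in E:\varepsilon\ge\alpha\}$ is integrable for $h\cdot m$, $m$ a Haar measure on $E$. $e$ is the identity of $E$, $\varepsilon^{-1}$ the group inverse; inequalities refer to the order of $\mathbb{R}$. An action of $E$ on $X$ is a family $(H_\varepsilon)_{\varepsilon\in E}$ of bijections of $X$ with $H_\varepsilon\circ H_{\varepsilon'}=H_{\varepsilon\varepsilon'}$, $H_e=\mathrm{id}_X$; it is continuous if $(\varepsilon,x)\mapsto H_\varepsilon(x)$ is continuous on $E\times X$; it is absorptive if some $\omega\in X$ satisfies: for every neighbourhood $V$ of $\omega$ and every $x\in X$ there are a neighbourhood $U$ of $x$ and $\alpha\in E$ with $H_{\varepsilon^{-1}}(U)\subset V$ for all $\varepsilon\le\alpha$. *)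

(* Defs.v *)
From Stdlib Require Import Reals Rtopology List.
Open Scope R_scope.

Record topology (X : Type) := {
  open : (X -> Prop) -> Prop;
  open_full : open (fun _ => True);
  open_inter : forall U V, open U -> open V -> open (fun x => U x /\ V x);
  open_union : forall F : (X -> Prop) -> Prop,
      (forall U, F U -> open U) -> open (fun x => exists U, F U /\ U x)
}.
Arguments open {X} t U.

Definition nbhd {X} (T : topology X) (x : X) (V : X -> Prop) : Prop :=
  exists U, open T U /\ U x /\ forall y, U y -> V y.

Definition tcompact {X} (T : topology X) (K : X -> Prop) : Prop :=
  forall F : (X -> Prop) -> Prop,
    (forall U, F U -> open T U) ->
    (forall x, K x -> exists U, F U /\ U x) ->
    exists l : list (X -> Prop),
      (forall U, In U l -> F U) /\ (forall x, K x -> exists U, In U l /\ U x).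

Definition hausdorff {X} (T : topology X) : Prop :=
  forall x y, x <> y -> exists U V, open T U /\ open T V /\ U x /\ V y /\
    forall z, ~ (U z /\ V z).

Definition locally_compact {X} (T : topology X) : Prop :=
  forall x, exists K, nbhd T x K /\ tcompact T K.

Definition sigma_compact {X} (T : topology X) : Prop :=
  exists K : nat -> X -> Prop, (forall n, tcompact T (K n)) /\
    forall x, exists n, K n x.

Definition discrete {X} (T : topology X) : Prop := forall U, open T U.

(* E is given as a subset of R (predicate), with group law op, identity e,
   inverse inv (only their values on E matter). *)

Definition cont_on (E : R -> Prop) (f : R -> R) : Prop :=
  forall a, E a -> forall eps, eps > 0 -> exists delta, delta > 0 /\
    forall b, E b -> Rabs (b - a) < delta -> Rabs (f b - f a) < eps.

Definition cont2_on (E : R -> Prop) (f : R -> R -> R) : Prop :=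
  forall a b, E a -> E b -> forall eps, eps > 0 -> exists delta, delta > 0 /\
    forall a' b', E a' -> E b' -> Rabs (a' - a) < delta -> Rabs (b' - b) < delta ->
      Rabs (f a' b' - f a b) < eps.

Definition lsc_on (E : R -> Prop) (g : R -> R) : Prop :=
  forall a, E a -> forall t, t < g a -> exists delta, delta > 0 /\
    forall b, E b -> Rabs (b - a) < delta -> t < g b.

Definition abelian_group_on (E : R -> Prop) (op : R -> R -> R) (e : R)
    (inv : R -> R) : Prop :=
  (forall a b, E a -> E b -> E (op a b)) /\
  (forall a b c, E a -> E b -> E c -> op (op a b) c = op a (op b c)) /\
  (forall a b, E a -> E b -> op a b = op b a) /\
  E e /\ (forall a, E a -> op e a = a) /\
  (forall a, E a -> E (inv a) /\ op a (inv a) = e).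

Definition ordered_group_on (E : R -> Prop) (op : R -> R -> R) : Prop :=
  forall a b c, E a -> E b -> E c -> a <= b -> op a c <= op b c.

Definition loc_compact_group_on (E : R -> Prop) (op : R -> R -> R)
    (inv : R -> R) : Prop :=
  cont2_on E op /\ cont_on E inv /\
  forall a, E a -> exists delta K, delta > 0 /\ compact K /\
    (forall b, K b -> E b) /\ (forall b, E b -> Rabs (b - a) < delta -> K b).

Definition Cc (E : R -> Prop) (f : R -> R) : Prop :=
  cont_on E f /\ exists K, compact K /\ (forall b, K b -> E b) /\
    forall b, E b -> ~ K b -> f b = 0.

(* Haar measure, as a (Bourbaki/Radon) positive linear functional on K(E),
   nonzero and translation invariant *)
Definition haar_integral (E : R -> Prop) (op : R -> R -> R)
    (I : (R -> R) -> R) : Prop :=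
  (forall f g, Cc E f -> Cc E g -> I (fun x => f x + g x) = I f + I g) /\
  (forall c f, Cc E f -> I (fun x => c * f x) = c * I f) /\
  (forall f, Cc E f -> (forall x, E x -> 0 <= f x) -> 0 <= I f) /\
  (exists f, Cc E f /\ I f <> 0) /\
  (forall f b, Cc E f -> E b -> I (fun x => f (op b x)) = I f).

(* The set {eps in E : eps >= alpha} is integrable for the measure h.m,
   i.e. the upper integral of h * 1_{[alpha,+oo)} w.r.t. I is finite:
   some (finite) lower semicontinuous majorant g has bounded integrals
   of its minorants in K(E). *)
Definition tail_integrable (E : R -> Prop) (I : (R -> R) -> R) (h : R -> R)
    (alpha : R) : Prop :=
  exists g : R -> R, lsc_on E g /\ (forall x, E x -> 0 <= g x) /\
    (forall x, E x -> alpha <= x -> h x <= g x) /\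
    exists M, forall f, Cc E f -> (forall x, E x -> 0 <= f x <= g x) -> I f <= M.

Definition RG3 (E : R -> Prop) (op : R -> R -> R) : Prop :=
  exists h : R -> R, cont_on E h /\
    (forall x, E x -> h x > 0) /\
    (forall a b, E a -> E b -> h (op a b) = h a * h b) /\
    (exists a b, E a /\ E b /\ h a <> h b) /\
    exists I, haar_integral E op I /\
      forall alpha, E alpha -> tail_integrable E I h alpha.

Definition R_group (E : R -> Prop) (op : R -> R -> R) (e : R)
    (inv : R -> R) : Prop :=
  (forall n : nat, (1 <= n)%nat -> E (INR n)) /\
  abelian_group_on E op e inv /\
  ordered_group_on E op /\
  loc_compact_group_on E op inv /\
  RG3 E op.

Definition action_on (E : R -> Prop) (op : R -> R -> R) (e : R) {X}
    (H : R -> X -> X) : Prop :=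
  (forall a, E a -> (forall x y, H a x = H a y -> x = y) /\
                    (forall y, exists x, H a x = y)) /\
  (forall a b, E a -> E b -> forall x, H a (H b x) = H (op a b) x) /\
  (forall x, H e x = x).

Definition continuous_action (E : R -> Prop) {X} (T : topology X)
    (H : R -> X -> X) : Prop :=
  forall a x, E a -> forall V, open T V -> V (H a x) ->
    exists delta U, delta > 0 /\ open T U /\ U x /\
      forall b y, E b -> Rabs (b - a) < delta -> U y -> V (H b y).

Definition absorptive (E : R -> Prop) (inv : R -> R) {X} (T : topology X)
    (H : R -> X -> X) : Prop :=
  exists omega : X, forall V, nbhd T omega V -> forall x,
    exists U alpha, nbhd T x U /\ E alpha /\
      forall eps, E eps -> eps <= alpha -> forall y, U y -> V (H (inv eps) y).

(* Main.v *)
Require Import Defs.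
From Stdlib Require Import Reals.
From Stdlib Require Import Classical ClassicalEpsilon List Lra Lia.
Open Scope R_scope.

Lemma list_choose {X} (F : (X->Prop)->Prop) (f : X -> X) (l' : list (X -> Prop)) :
  (forall W, In W l' -> exists U, F U /\ forall z, W z -> U (f z)) ->
  exists l, (forall U, In U l -> F U) /\
    (forall W z, In W l' -> W z -> exists U, In U l /\ U (f z)).
Proof.
  induction l' as [|a l' IH]; intros H.
  - exists nil; split; intros; contradiction.
  - destruct (H a (or_introl eq_refl)) as [U [HU HaU]].
    destruct IH as [l [H1 H2]]. { intros; apply H; right; auto. }
    exists (U :: l). split.
    + intros U' [<-|Hin]; auto.
    + intros W z [<-|Hin] Hz.
      * exists U; split; [left; reflexivity| auto].
      * destruct (H2 W z Hin Hz) as [U' [? ?]]; exists U'; split; [right|]; auto.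
Qed.

Lemma preimage_compact {X} (T: topology X) (f g : X -> X) (Kc : X -> Prop):
  tcompact T Kc ->
  (forall k V, open T V -> V (f k) -> exists W, open T W /\ W k /\ forall z, W z -> V (f z)) ->
  (forall x, f (g x) = x) -> (forall k, g (f k) = k) ->
  tcompact T (fun x => Kc (g x)).
Proof.
  intros HK Hf Hfg Hgf F HF Hcov.
  destruct (HK (fun W => open T W /\ exists U, F U /\ forall z, W z -> U (f z)))
    as [l' [Hl'1 Hl'2]].
  - intros W [HW _]; exact HW.
  - intros k Hk. destruct (Hcov (f k)) as [U [HFU HUk]].
    { rewrite Hgf; exact Hk. }
    destruct (Hf k U (HF U HFU) HUk) as [W [HW [HWk HWU]]].
    exists W; split; [split; [exact HW| exists U; split; auto] | exact HWk].
  - destruct (list_choose F f l') as [l [H1 H2]].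
    { intros W HW. destruct (Hl'1 W HW) as [_ H']; exact H'. }
    exists l. split; auto.
    intros x Hx. destruct (Hl'2 (g x) Hx) as [W [HinW HWx]].
    destruct (H2 W (g x) HinW HWx) as [U [HinU HU]].
    rewrite Hfg in HU. eauto.
Qed.

Lemma list_min (E: R->Prop) {X} (P : (X -> Prop) -> R -> Prop) (a0: R) (Ea0 : E a0)
  (l : list (X->Prop)) :
 (forall W, In W l -> exists a, E a /\ forall eps, E eps -> eps <= a -> P W eps) ->
 exists a, E a /\ forall W, In W l -> forall eps, E eps -> eps <= a -> P W eps.
Proof.
  induction l as [|W0 l IH]; intros H.
  - exists a0; split; auto; intros; contradiction.
  - destruct (H W0 (or_introl eq_refl)) as [a1 [Ea1 Ha1]].
    destruct IH as [a [Ea Ha]]. { intros; apply H; right; auto. }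
    exists (Rmin a1 a). split.
    + unfold Rmin; destruct Rle_dec; auto.
    + intros W [<-|Hin] eps Eeps Hle.
      * apply Ha1; auto. eapply Rle_trans; [exact Hle| apply Rmin_l].
      * apply Ha; auto. eapply Rle_trans; [exact Hle| apply Rmin_r].
Qed.

Lemma coinitial (E : R -> Prop) (x0 : R) (Ex0 : E x0) : exists d : nat -> R, (forall n, E (d n)) /\
  forall alpha b, E b -> b < alpha -> exists n, d n <= alpha.
Proof.
  destruct (classic (exists c, forall x, E x -> c <= x)) as [[c Hc]|Hnb].
  - destruct (completeness (fun y => E (- y))) as [l [Hub Hlub]].
    + exists (- c). intros y Hy. pose proof (Hc _ Hy). lra.
    + exists (- x0). rewrite Ropp_involutive; exact Ex0.
    + assert (Hex : forall n, exists x, E x /\ x < - l + / INR (S n)).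
      { intro n. apply NNPP; intro Hn.
        assert (Ht : 0 < / INR (S n)) by (apply Rinv_0_lt_compat, lt_0_INR; lia).
        assert (l <= l - / INR (S n)); [|lra].
        apply Hlub. intros y Hy.
        destruct (Rle_dec y (l - / INR (S n))) as [?|Hgt]; auto.
        exfalso; apply Hn; exists (- y); split; auto; lra. }
      exists (fun n => proj1_sig (constructive_indefinite_description _ (Hex n))).
      split.
      * intro n. exact (proj1 (proj2_sig (constructive_indefinite_description _ (Hex n)))).
      * intros alpha b Eb Hb.
        assert (Hmb : - l <= b).
        { assert (- b <= l); [|lra]. apply Hub. rewrite Ropp_involutive; exact Eb. }
        destruct (archimed_cor1 (alpha + l)) as [N [HN HN0]]; [lra|].
        destruct N as [|n]; [lia|].
        exists n. pose proof (proj2 (proj2_sig (constructive_indefinite_description _ (Hex n)))) as Hx.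
        simpl in *. set (v := proj1_sig _) in *. lra.
  - assert (Hex : forall n, exists x, E x /\ x < - INR n).
    { intro n. apply NNPP; intro Hn. apply Hnb. exists (- INR n).
      intros x Ex. destruct (Rle_dec (- INR n) x) as [?|Hgt]; auto.
      exfalso; apply Hn; exists x; split; auto; lra. }
    exists (fun n => proj1_sig (constructive_indefinite_description _ (Hex n))).
    split.
    + intro n. exact (proj1 (proj2_sig (constructive_indefinite_description _ (Hex n)))).
    + intros alpha b Eb Hb. destruct (INR_unbounded (- alpha)) as [n Hn].
      exists n. pose proof (proj2 (proj2_sig (constructive_indefinite_description _ (Hex n)))) as Hx.
      simpl in *. set (v := proj1_sig _) in *. lra.
Qed.

Lemma exists_smaller (E : R -> Prop) (op : R -> R -> R) (e : R) (inv : R -> R)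
  (HE : R_group E op e inv) : forall alpha, E alpha -> exists b, E b /\ b < alpha.
Proof.
  destruct HE as [Hint [Hab [Hord _]]].
  destruct Hab as [Hclos [Hassoc [Hcomm [Ee [Hid Hinv]]]]].
  intros alpha Ea.
  assert (E1 : E (INR 1)) by (apply Hint; lia).
  assert (E2 : E (INR 2)) by (apply Hint; lia).
  assert (H12 : INR 1 < INR 2) by (apply lt_INR; lia).
  destruct (Hinv _ E2) as [Ei2 Hi2].
  destruct (Hinv _ Ea) as [Eia Hia].
  set (g := op (INR 1) (inv (INR 2))).
  assert (Eg : E g) by (apply Hclos; auto).
  assert (Hge : g <= e).
  { rewrite <- Hi2. apply Hord; auto. lra. }
  assert (Hgne : g <> e).
  { intro Hg.
    assert (op g (INR 2) = INR 1).
    { unfold g. rewrite Hassoc; auto. rewrite (Hcomm (inv _)); auto.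
      rewrite Hi2, Hcomm, Hid; auto. }
    rewrite Hg, Hid in H; auto. lra. }
  exists (op g alpha). split; [apply Hclos; auto|].
  assert (Hle : op g alpha <= alpha).
  { pose proof (Hord g e alpha Eg Ee Ea Hge) as Hh. rewrite Hid in Hh; auto. }
  destruct Hle as [?|Heq]; auto. exfalso; apply Hgne.
  assert (op (op g alpha) (inv alpha) = op alpha (inv alpha)) by (rewrite Heq; auto).
  rewrite Hassoc, Hia in H; auto. rewrite Hcomm, Hid in H; auto.
Qed.

Theorem corollary2p1 (E : R -> Prop) (op : R -> R -> R) (e : R) (inv : R -> R)
  (HE : R_group E op e inv)
  (X : Type) (T : topology X) (HT2 : hausdorff T) (HTlc : locally_compact T)
  (Hnt : exists x y : X, x <> y)
  (H : R -> X -> X) (Hact : action_on E op e H)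
  (Hcont : continuous_action E T H) (Habs : absorptive E inv T H) :
  ~ tcompact T (fun _ => True) /\ ~ discrete T /\ sigma_compact T.
Proof.
  pose proof (exists_smaller E op e inv HE) as Hsm.
  destruct HE as [Hint [Hab [Hord _]]].
  destruct Hab as [Hclos [Hassoc [Hcomm [Ee [Hid Hinv]]]]].
  destruct Hact as [Hbij [Hcomp Hide]].
  destruct Habs as [omega Hom].
  assert (Hat : forall V, nbhd T omega V -> forall x, exists al, E al /\
            forall eps, E eps -> eps <= al -> V (H (inv eps) x)).
  { intros V HV x. destruct (Hom V HV x) as [U [al [[W [_ [HWx HWU]]] [Eal Hal]]]].
    exists al; split; auto. }
  split; [|split].
  - intro Hc.
    assert (Hz : exists z, z <> omega).
    { destruct Hnt as [x [y Hxy]]. destruct (classic (x = omega)) as [->|Hx]; eauto. }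
    destruct Hz as [z Hz].
    destruct (HT2 omega z (fun h => Hz (eq_sym h))) as [U0 [V0 [HU0 [HV0 [HU0o [HV0z Hdisj]]]]]].
    assert (HN : nbhd T omega U0) by (exists U0; auto).
    destruct (Hc (fun W => open T W /\ exists a, E a /\ forall eps, E eps -> eps <= a ->
                     forall y, W y -> U0 (H (inv eps) y))) as [l [Hl1 Hl2]].
    + intros W [? _]; auto.
    + intros x _. destruct (Hom U0 HN x) as [U [al [[W [HW [HWx HWU]]] [Eal Hal]]]].
      exists W. split; auto. split; auto. exists al; split; auto.
    + destruct (list_min E (fun W eps => forall y, W y -> U0 (H (inv eps) y)) e Ee l)
        as [a [Ea Ha]].
      { intros W HW. destruct (Hl1 W HW) as [_ H']; exact H'. }
      destruct (Hinv a Ea) as [Eia _].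
      destruct (proj2 (Hbij _ Eia) z) as [w Hw].
      destruct (Hl2 w I) as [W [HinW HWw]].
      pose proof (Ha W HinW a Ea (Rle_refl a) w HWw) as HU.
      rewrite Hw in HU. apply (Hdisj z); auto.
  - intro Hd.
    assert (HN : nbhd T omega (fun z => z = omega)).
    { exists (fun z => z = omega). split; [apply Hd|]. auto. }
    assert (Hall : forall x, x = omega).
    { intro x. destruct (Hat _ HN x) as [a1 [Ea1 Ha1]].
      destruct (Hat _ HN omega) as [a2 [Ea2 Ha2]].
      assert (Em : E (Rmin a1 a2)) by (unfold Rmin; destruct Rle_dec; auto).
      apply (proj1 (Hbij _ (proj1 (Hinv _ Em)))).
      rewrite Ha1, Ha2; auto; [apply Rmin_r|apply Rmin_l]. }
    destruct Hnt as [x [y Hxy]]. apply Hxy. rewrite (Hall x), (Hall y). reflexivity.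
  - destruct (HTlc omega) as [Kc [HKn HKc]].
    destruct (coinitial E e Ee) as [d [Ed Hd]].
    exists (fun n x => Kc (H (inv (d n)) x)). split.
    + intro n. destruct (Hinv _ (Ed n)) as [Eid Hid2].
      apply preimage_compact with (f := H (d n)); auto.
      * intros k V HV HVk.
        destruct (Hcont (d n) k (Ed n) V HV HVk) as [delta [U [Hdel [HU [HUk HUV]]]]].
        exists U; split; auto; split; auto. intros z Hz. apply HUV; auto.
        replace (d n - d n) with 0 by ring. rewrite Rabs_R0; auto.
      * intro x. rewrite Hcomp, Hid2; auto.
      * intro k. rewrite Hcomp, Hcomm, Hid2; auto.
    + intro x. destruct (Hat Kc HKn x) as [al [Eal Hal]].
      destruct (Hsm al Eal) as [b [Eb Hb]].
      destruct (Hd al b Eb Hb) as [n Hn].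
      exists n. apply Hal; auto.
Qed.
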